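(* Let $t_0<\beta\le+\infty$, $J=[t_0,\beta[$, let $D\subset\mathbb{R}^n$ be an open set, let $m\ge1$, and let $f\colon J\times D^m\to\mathbb{R}^n$ be continuous. Suppose there is a continuous function $k\colon J\to\mathbb{R}$ such that \[ \|F(t,z)-F(t,z')\|\le k(t)\,\|z-z'\|\qquad(t\in J,\ z,z'\in D^m), \] where $F(t,(z_1,\dots,z_m))=f(t,z_1,\dots,z_m)$. Let $g_1,\dots,g_m\colon J\to\mathbb{R}$ be continuous functions such that, for some real $\gamma\le t_0$, $\gamma\le g_j(t)\le t$ for all $t\in J$, $j=1,\dots,m$. Let $\theta,\widetilde\theta\colon[\gamma,t_0]\to D$ be continuous initial functions. Suppose $x,\widetilde x\colon[\gamma,\beta[\to D$ are solutions of the problems \[ x'(t)=f\big(t,x(g_1(t)),\dots,x(g_m(t))\big)\ (t\in J),\quad x(t)=\theta(t)\ (t\in[\gamma,t_0]), \] \[ \widetilde x'(t)=f\big(t,\widetilde x(g_1(t)),\dots,\widetilde x(g_m(t))\big)\ (t\in J),\quad \widetilde x(t)=\widetilde\theta(t)\ (t\in[\gamma,t_0]), \] respectively. Then for all $t\in[t_0,\beta[$, \[ \|x(t)-\widetilde x(t)\|\le\|\theta-\widetilde\theta\|\exp\Big(\int_{t_0}^t k(s)\,ds\Big), \] where $\|\theta-\widetilde\theta\|=\sup_{\gamma\le s\le t_0}\|\theta(s)-\widetilde\theta(s)\|$.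
   Context: A solution on $[\gamma,\beta[$ is a continuous function $[\gamma,\beta[\to D$, differentiable on $[t_0,\beta[$ (one-sided at $t_0$), satisfying the differential equation for all $t\in[t_0,\beta[$ and equal to the given initial function on $[\gamma,t_0]$. The norm $\|\cdot\|$ on $\mathbb{R}^n$ is a fixed norm, and on $D^m\subset(\mathbb{R}^n)^m$ the norm is $\|(z_1,\dots,z_m)\|=\max_{1\le j\le m}\|z_j\|$. *)

(* Defs.v *)
From HB Require Import structures.
From mathcomp Require Import all_boot all_order all_algebra.
From mathcomp Require Import all_classical all_reals all_analysis.
Set Implicit Arguments. Unset Strict Implicit. Unset Printing Implicit Defensive.
Import Order.TTheory GRing.Theory Num.Theory.
Import numFieldNormedType.Exports.
Local Open Scope classical_set_scope.
Local Open Scope ring_scope.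

Definition is_norm (R : realType) (n : nat) (N : 'rV[R]_n -> R) : Prop :=
  [/\ forall v, N v = 0 -> v = 0,
      forall (a : R) v, N (a *: v) = `|a| * N v
    & forall u v, N (u + v) <= N u + N v].

(* The norm on (R^n)^m, points represented as m x n matrices whose rows are
   z_1, ..., z_m :  ||(z_1,...,z_m)|| = max_j ||z_j||. *)
Definition normm (R : realType) (m n : nat) (N : 'rV[R]_n -> R)
  (z : 'M[R]_(m, n)) : R :=
  \big[Order.max/0]_(j < m) N (row j z).

Definition powset (R : realType) (m n : nat) (D : set 'rV[R]_n)
  : set 'M[R]_(m, n) := [set z | forall j : 'I_m, D (row j z)].

Definition Jint (R : realType) (t0 : R) (beta : \bar R) : set R :=
  [set t | t0 <= t /\ (t%:E < beta)%E].

Definition right_deriv (R : realType) (V : normedModType R) (x : R -> V)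
  (t : R) (v : V) : Prop :=
  (fun h : R => h^-1 *: (x (h + t) - x t)) @ 0^'+ --> v.

Definition is_solution (R : realType) (m n : nat) (D : set 'rV[R]_n)
  (f : R -> 'M[R]_(m, n) -> 'rV[R]_n) (g : 'I_m -> R -> R)
  (gamma t0 : R) (beta : \bar R) (theta : R -> 'rV[R]_n) (x : R -> 'rV[R]_n)
  : Prop :=
  [/\ {within [set t | gamma <= t /\ (t%:E < beta)%E], continuous x},
      (forall t, gamma <= t -> (t%:E < beta)%E -> D (x t)),
      right_deriv x t0 (f t0 (\matrix_(j < m, k < n) x (g j t0) 0 k)),
      (forall t, t0 < t -> (t%:E < beta)%E ->
          is_derive t 1 x (f t (\matrix_(j < m, k < n) x (g j t) 0 k)))
    & (forall t, gamma <= t <= t0 -> x t = theta t)].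
Arguments powset {R} m {n} D _.

(* Main.v *)
Require Import Defs.
From HB Require Import structures.
From mathcomp Require Import all_boot all_order all_algebra.
From mathcomp Require Import all_classical all_reals all_analysis.
From mathcomp Require Import ring lra.
Import Order.TTheory GRing.Theory Num.Theory.
Import numFieldNormedType.Exports.
Local Open Scope classical_set_scope.
Local Open Scope ring_scope.

Section Norm.
Variables (R : realType) (n : nat) (N : 'rV[R]_n -> R).
Hypothesis hN : is_norm N.

Lemma N0 : N 0 = 0.
Proof. case: hN => _ hZ _. by rewrite -(scale0r 0) hZ normr0 mul0r. Qed.

Lemma NN v : N (- v) = N v.
Proof. case: hN => _ hZ _. by rewrite -scaleN1r hZ normrN normr1 mul1r. Qed.

Lemma Nge0 v : 0 <= N v.
Proof.
case: hN => _ _ hD. have := hD v (- v). rewrite subrr N0 NN.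
move=> h. have : 0 <= N v *+ 2 by rewrite mulr2n. by rewrite pmulrn_lge0.
Qed.

Lemma NB u v : N u - N v <= N (u - v).
Proof.
case: hN => _ _ hD. rewrite lerBlDr. have := hD (u - v) v. by rewrite subrK.
Qed.

Lemma Nsum (I : Type) (r : seq I) (F : I -> 'rV[R]_n) :
  N (\sum_(i <- r) F i) <= \sum_(i <- r) N (F i).
Proof.
case: hN => _ _ hD.
elim: r => [|a r IH]; first by rewrite !big_nil N0.
rewrite !big_cons. apply: le_trans (hD _ _) _. by rewrite lerD2l.
Qed.

Lemma Nbound : exists c, 0 <= c /\ forall v, N v <= c * `|v|.
Proof.
case: hN => _ hZ _.
exists (\sum_(j < n) N (delta_mx 0 j)); split.
  by apply: sumr_ge0 => j _; exact: Nge0.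
move=> v.
have e : v = \sum_(j < n) v 0 j *: delta_mx 0 j.
  apply/rowP => j. rewrite summxE (bigD1 j) //= big1 ?addr0.
    by rewrite !mxE !eqxx mulr1.
  by move=> i /negbTE ij; rewrite !mxE eq_sym ij andbF mulr0.
rewrite {1}e; apply: le_trans; first exact: Nsum.
rewrite mulr_suml; apply: ler_sum => j _.
rewrite hZ mulrC; apply: ler_wpM2l; first exact: Nge0.
have -> : `|v| = mx_norm v by []. rewrite mx_normrE. exact: (le_bigmax _ _ (0, j)).
Qed.
Lemma Ncont : continuous N.
Proof.
have [c [c0 hc]] := Nbound.
have ce : forall e : R, 0 < e -> c * (e / (c + 1)) <= e.
  move=> e e0; rewrite mulrA ler_pdivrMr ?ltr_pwDr //; nra.
move=> v; apply/(@cvgrPdist_le _ _ _ (nbhs v) (nbhs_filter v)) => e e0.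
apply/nbhs_ballP; exists (e / (c + 1)); first by rewrite /= divr_gt0 // ltr_pwDr.
move=> u; rewrite mx_norm_ball /= => vu; rewrite ler_norml; apply/andP; split.
  rewrite lerNl opprB; apply: le_trans (NB _ _) _.
  rewrite -NN opprB; apply: le_trans (hc _) _.
  apply: le_trans (_ : c * (e / (c + 1)) <= e).
    by apply: ler_wpM2l => //; apply: ltW.
  exact: ce.
apply: le_trans (NB _ _) _; apply: le_trans (hc _) _.
apply: le_trans (_ : c * (e / (c + 1)) <= e).
  by apply: ler_wpM2l => //; apply: ltW.
exact: ce.
Qed.

End Norm.
Arguments N0 {R n N}. Arguments NN {R n N}. Arguments Nge0 {R n N}. Arguments NB {R n N}.
Arguments Nsum {R n N}. Arguments Nbound {R n N}. Arguments Ncont {R n N}.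

Lemma near_expl (R : realType) (V : normedModType R) (x : V) (P : V -> Prop) :
  (\forall y \near x, P y) -> exists2 e, 0 < e & forall y, `|x - y| < e -> P y.
Proof. by move/nbhs_normP => [e e0 H]; exists e => // y; apply: H. Qed.
Arguments near_expl {R V x P}.
Lemma zmod4 (V : zmodType) (a b c d : V) : a - b - (c - d) = a - c - (b - d).
Proof. by rewrite !opprB addrACA [RHS]addrACA [- b + _]addrC. Qed.
Lemma zmod3 (V : zmodType) (A B X : V) : A + B + (X - A - B) = X.
Proof. by rewrite -(addrA X) -opprD [LHS]addrC subrK. Qed.

Lemma rd_of_derive (R : realType) (V : normedModType R) (x : R -> V) (s : R) (v : V) :
  is_derive s (1 : R) x v -> (fun h : R => h^-1 *: (x (h + s) - x s)) @ 0^'+ --> v.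
Proof.
case=> dx dv.
have H : (fun h : R => h^-1 *: ((x \o shift s) (h *: 1) - x s)) @ 0^' --> v.
  by rewrite -dv; exact: dx.
have -> : (fun h : R => h^-1 *: (x (h + s) - x s)) =
          (fun h : R => h^-1 *: ((x \o shift s) (h *: 1) - x s)).
  by apply/funext => h /=; rewrite /shift /= [h%:A]mulr1.
apply: cvg_trans H; apply: cvg_app; apply: within_subset => // h /= /gt_eqF ->.
by [].
Qed.

Lemma wder_gen (R : realType) n (N : 'rV[R]_n -> R) (hN : is_norm N)
  (x x' : R -> 'rV[R]_n) (s : R) (vx vx' : 'rV[R]_n) :
  (fun h => h^-1 *: (x (h + s) - x s)) @ 0^'+ --> vx ->
  (fun h => h^-1 *: (x' (h + s) - x' s)) @ 0^'+ --> vx' ->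
  forall e : R, 0 < e -> exists2 d : R, 0 < d & forall h : R, 0 < h < d ->
    N (x (s + h) - x' (s + h)) <= N (x s - x' s) + h * N (vx - vx') + h * e.
Proof.
move=> Lx Lx' e e0.
have [c [c0 hc]] := Nbound hN.
have L : (fun h : R => h^-1 *: (x (h + s) - x s) - h^-1 *: (x' (h + s) - x' s))
   @ 0^'+ --> vx - vx' by apply: cvgB.
have e'0 : 0 < e / (c + 1) by rewrite divr_gt0 // ltr_pwDr.
move: L => /cvgrPdist_lt /(_ _ e'0) H0.
have H : \forall h \near (0:R), 0 < h -> `|vx - vx' - (h^-1 *: (x (h + s) - x s) - h^-1 *: (x' (h + s) - x' s))| < e / (c + 1) := H0.
have [d d0 hd] := near_expl H.
exists d => // h /andP[h0 hd'].
have := hd h; rewrite sub0r normrN gtr0_norm // => /(_ hd' h0) {}hd.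
set dv := vx - vx'.
set Y := x (s + h) - x' (s + h) - (x s - x' s).
have eY : h^-1 *: (x (h + s) - x s) - h^-1 *: (x' (h + s) - x' s) = h^-1 *: Y.
  by rewrite /Y -scalerBr (addrC h s) zmod4.
rewrite eY in hd.
case: (hN) => _ hZ hD.
have e1 : x (s + h) - x' (s + h) = (x s - x' s) + h *: dv + (Y - h *: dv).
  by rewrite /Y zmod3.
rewrite e1; apply: le_trans (hD _ _) _; apply: lerD.
  by apply: le_trans (hD _ _) _; rewrite hZ gtr0_norm.
have -> : Y - h *: dv = h *: (h^-1 *: Y - dv).
  by rewrite [RHS]scalerBr scalerA mulfV ?gt_eqF // scale1r.
rewrite hZ gtr0_norm //; apply: ler_wpM2l; first exact: ltW.
apply: le_trans (hc _) _.
rewrite -normrN opprB.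
apply: le_trans (_ : c * (e / (c + 1)) <= e).
  by apply: ler_wpM2l => //; apply: ltW.
rewrite mulrA ler_pdivrMr ?ltr_pwDr //; nra.
Qed.
Arguments wder_gen {R n N} hN {x x' s vx vx'}.
Lemma core (R : realType) (t0 T gamma C eps : R) (w K k : R -> R)
  (ms : nat) (g : 'I_ms -> R -> R) :
  gamma <= t0 -> t0 <= T -> 0 <= C -> 0 < eps ->
  (forall u, gamma <= u <= t0 -> w u <= C) ->
  (forall u, t0 <= u <= T -> 0 <= K u) ->
  (forall a b lo, t0 <= a -> a <= b -> b <= T ->
     (forall u, a <= u <= b -> lo <= k u) -> K a + lo * (b - a) <= K b) ->
  (forall u, t0 <= u <= T -> 0 <= k u) ->
  (forall s, t0 < s <= T -> forall e, 0 < e ->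
     exists2 d, 0 < d & forall u, s - d < u <= s -> w s - e < w u) ->
  (forall s P, t0 <= s <= T -> (forall j, w (g j s) <= P) -> 0 <= P ->
     forall e, 0 < e -> exists2 d, 0 < d &
       forall h, 0 < h < d -> w (s + h) <= w s + h * (k s * P) + h * e) ->
  (forall s, t0 <= s <= T -> forall e, 0 < e ->
     exists2 d, 0 < d & forall u, s <= u <= T -> u < s + d -> k s - e <= k u) ->
  (forall j u, t0 <= u <= T -> gamma <= g j u <= u) ->
  w T <= C * expR (K T) + eps * expR (K T + T - t0).
Proof.
move=> gt0 t0T C0 eps0 wC K0 Kadd k0 wcont wder kcont gb.
pose phi u := C * expR (K u) + eps * expR (K u + u - t0).
have Kmono : forall a b, t0 <= a -> a <= b -> b <= T -> K a <= K b.
  move=> a b ta ab bT; have := Kadd a b 0 ta ab bT.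
  rewrite mul0r addr0; apply => u /andP[au ub]; apply: k0.
  by rewrite (le_trans ta au) (le_trans ub bT).
have phimono : forall a b, t0 <= a -> a <= b -> b <= T -> phi a <= phi b.
  move=> a b ta ab bT; rewrite /phi; apply: lerD.
    by apply: ler_wpM2l => //; rewrite ler_expR; exact: Kmono.
  apply: ler_wpM2l; first exact: ltW.
  rewrite ler_expR; apply: lerD => //; apply: lerD => //; exact: Kmono.
have phit0 : C < phi t0.
  rewrite /phi; apply: (@le_lt_trans _ _ (C * expR (K t0))).
    rewrite -[X in X <= _]mulr1; apply: ler_wpM2l => //.
    by rewrite -expR0 ler_expR K0 // lexx.
  by rewrite ltrDl mulr_gt0 // expR_gt0.
rewrite -/(phi T); rewrite leNgt; apply/negP => phiT.
pose S := [set u | t0 <= u <= T /\ phi u < w u].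
have hS : has_inf S.
  split; first by exists T; rewrite /S /= t0T lexx.
  by exists t0 => u [/andP[]].
set s := inf S.
have t0s : t0 <= s.
  by apply: lb_le_inf; [exists T; rewrite /S /= t0T lexx| move=> u [/andP[]]].
have sT : s <= T by apply: (ge_inf hS.2); rewrite /S /= t0T lexx.
have sI : t0 <= s <= T by rewrite t0s sT.
have notS : forall u, t0 <= u < s -> w u <= phi u.
  move=> u /andP[tu us]; rewrite leNgt; apply/negP => pu.
  have : s <= u.
    by apply: (ge_inf hS.2); split => //; rewrite tu /= (ltW (lt_le_trans us sT)).
  by rewrite leNgt us.
have ws : w s <= phi s.
  rewrite leNgt; apply/negP => ps.
  have [st0|st0] := eqVneq s t0.
    move: ps; rewrite st0 => ps.
    have := le_lt_trans (wC t0 _) (lt_trans phit0 ps).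
    by rewrite gt0 lexx ltxx => /(_ isT).
  have lt0s : t0 < s by rewrite lt_neqAle eq_sym st0 t0s.
  have sI' : t0 < s <= T by rewrite lt0s sT.
  have e0 : 0 < w s - phi s by rewrite subr_gt0.
  have [d d0 hd] := wcont s sI' (w s - phi s) e0.
  pose u := s - Num.min d (s - t0) / 2.
  have mpos : 0 < Num.min d (s - t0) by rewrite lt_min d0 subr_gt0.
  have us : u < s by rewrite /u ltrBlDr ltrDl divr_gt0.
  have tu : t0 < u.
    rewrite /u ltrBrDl -ltrBrDr.
    apply: (@lt_le_trans _ _ (Num.min d (s - t0))); last by rewrite ge_min lexx orbT.
    by rewrite gtr_pMr // invf_lt1 // ltr1n.
  have wu : phi s < w u.
    have := hd u; rewrite subKr => -> //; rewrite (ltW us) andbT.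
    rewrite /u ltrD2l ltrN2.
    apply: (@lt_le_trans _ _ (Num.min d (s - t0))); last by rewrite ge_min lexx.
    by rewrite gtr_pMr // invf_lt1 // ltr1n.
  have := notS u; rewrite (ltW tu) us => /(_ isT) wle.
  have := phimono u s (ltW tu) (ltW us) sT.
  by move=> H; have := lt_le_trans (le_lt_trans H wu) wle; rewrite ltxx.
have phis0 : C <= phi s.
  by apply: le_trans (ltW phit0) (phimono _ _ (lexx _) t0s sT).
have gbd : forall j, w (g j s) <= phi s.
  move=> j; have /andP[gg gs] := gb j s sI.
  have [gt|tg] := leP (g j s) t0.
    by apply: le_trans (wC _ _) phis0; rewrite gg gt.
  have [gse|gsne] := eqVneq (g j s) s; first by rewrite gse.
  have gls : g j s < s by rewrite lt_neqAle gsne gs.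
  apply: le_trans (notS _ _) _; first by rewrite (ltW tg) gls.
  exact: phimono (ltW tg) gs sT.
pose P := phi s.
pose B := eps * expR (K s + s - t0).
have B0 : 0 < B by rewrite mulr_gt0 // expR_gt0.
have P0 : 0 < P by apply: lt_le_trans B0 _; rewrite /P /phi lerDr mulr_ge0 // expR_ge0.
have B3 : 0 < B / 3 by rewrite divr_gt0.
have B3P : 0 < B / (3 * P) by rewrite divr_gt0 // mulr_gt0.
have [d1 d10 hd1] := wder s P sI gbd (ltW P0) (B / 3) B3.
have [d2 d20 hd2] := kcont s sI (B / (3 * P)) B3P.
have md : 0 < Num.min d1 d2 by rewrite lt_min d10 d20.
have [u Su ud] := inf_adherent md hS.
case: (Su) => /andP[tu uT] pwu.
have su : s <= u by apply: (ge_inf hS.2).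
have [seu|sneu] := eqVneq s u.
  by move: pwu; rewrite -seu => /(le_lt_trans ws); rewrite ltxx.
have slu : s < u by rewrite lt_neqAle sneu su.
pose h := u - s.
have h0 : 0 < h by rewrite subr_gt0.
have hd1' : h < d1.
  by rewrite /h ltrBlDl (lt_le_trans ud) // lerD2l ge_min lexx.
have hd2' : u < s + d2.
  by rewrite (lt_le_trans ud) // lerD2l ge_min lexx orbT.
have wuB : w u <= P + h * (k s * P) + h * (B / 3).
  have := hd1 h; rewrite h0 hd1' /h addrC subrK => /(_ isT) H.
  by apply: le_trans H _; rewrite lerD2r lerD2r.
have Ku : K s + (k s - B / (3 * P)) * h <= K u.
  apply: Kadd => //.
  move=> v /andP[sv vu]; apply: hd2; first by rewrite sv (le_trans vu uT).
  exact: le_lt_trans vu hd2'.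
pose D := K u - K s.
have DB : (k s - B / (3 * P)) * h <= D by rewrite /D lerBrDl.
have e1 : expR (K s) * (1 + D) <= expR (K u).
  by rewrite -[K u](subrK (K s)) expRD mulrC ler_wpM2r ?expR_ge0 // expR_ge1Dx.
have e2 : expR (K s + s - t0) * (1 + (D + h)) <= expR (K u + u - t0).
  have -> : K u + u - t0 = (K s + s - t0) + (D + h).
    by rewrite /D /h; lra.
  rewrite [expR (_ + (D + h))]expRD; apply: ler_wpM2l; [exact: expR_ge0| exact: expR_ge1Dx].
have phiu : C * (expR (K s) * (1 + D)) + eps * (expR (K s + s - t0) * (1 + (D + h)))
   <= phi u.
  by rewrite /phi; apply: lerD; apply: ler_wpM2l => //; exact: ltW.
set A := C * expR (K s).
have A0 : 0 <= A by rewrite mulr_ge0 // expR_ge0.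
have PAB : P = A + B by [].
have hP : P * (B / (3 * P)) = B / 3.
  by field; rewrite gt_eqF.
have : P + h * (k s * P) + h * (B / 3) < phi u.
  apply: lt_le_trans phiu.
  rewrite [C * (_ * (1 + D))]mulrA -/A [eps * (_ * _)]mulrA -/B.
  have AD : A * (1 + (k s - B / (3 * P)) * h) <= A * (1 + D).
    by apply: ler_wpM2l => //; rewrite lerD2l.
  have BD : B * (1 + ((k s - B / (3 * P)) * h + h)) <= B * (1 + (D + h)).
    by apply: ler_wpM2l; [exact: ltW| rewrite lerD2l lerD2r].
  apply: lt_le_trans (lerD AD BD).
  have hP' : h * (P * (B / (3 * P))) = h * (B / 3) by rewrite hP.
  rewrite PAB in hP' *.
  nra.
by move=> /(le_lt_trans wuB)/lt_trans/(_ pwu); rewrite ltxx.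
Qed.
Lemma Kadd_lem (R : realType) (k : R -> R) (t0 : R) (beta : \bar R) a b lo :
  {within Jint t0 beta, continuous k} -> t0 <= a -> a <= b -> (b%:E < beta)%E ->
  (forall u, a <= u <= b -> lo <= k u) ->
  \int[lebesgue_measure]_(s in `[t0, a]) k s + lo * (b - a)
    <= \int[lebesgue_measure]_(s in `[t0, b]) k s.
Proof.
move=> kc ta ab bb lok.
have sub : `[t0, b] `<=` Jint t0 beta.
  move=> u /=; rewrite in_itv /= => /andP[tu ub]; split => //.
  by apply: le_lt_trans bb; rewrite lee_fin.
have ib : lebesgue_measure.-integrable `[t0, b] (EFin \o k).
  apply: continuous_compact_integrable; first exact: segment_compact.
  exact: continuous_subspaceW kc.
have -> : [set` `[t0, b]] = [set` `[t0, a]] `|` [set` `]a, b]].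
  by apply: itv_bndbnd_setU; rewrite bnd_simp.
rewrite Rintegral_setU //; first last.
  apply/disj_setPS => u [] /=; rewrite !in_itv /= => /andP[_ ua] /andP[au _].
  by move: (le_lt_trans ua au); rewrite ltxx.
- rewrite -itv_bndbnd_setU //; rewrite bnd_simp //.
rewrite lerD2l.
have iab : lebesgue_measure.-integrable `]a, b] (EFin \o k).
  apply: integrableS ib => //.
  by move=> u /=; rewrite !in_itv /= => /andP[au ->]; rewrite andbT (le_trans ta) // ltW.
have icst : lebesgue_measure.-integrable `]a, b] (EFin \o (fun=> lo)).
  have ic : lebesgue_measure.-integrable `[a, b] (EFin \o (fun=> lo)).
    apply: continuous_compact_integrable; first exact: segment_compact.
    by move=> ?; apply: cvg_cst.
  apply: integrableS ic => //.
  by move=> u /=; rewrite !in_itv /= => /andP[au ->]; rewrite andbT ltW.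
apply: le_trans (le_Rintegral _ icst iab _) => //.
  rewrite Rintegral_cst // [X in fine X]lebesgue_measure_itv /= lte_fin.
  have [ab'|] := ltP a b; first by rewrite /=.
  move=> ba; have -> : b = a by apply/eqP; rewrite eq_le ab ba.
  by rewrite subrr mulr0.
move=> u /=; rewrite in_itv /= => /andP[au ub]; apply: lok; rewrite ub ltW //.
Qed.

Theorem mainTheorem2 (R : realType) (n m : nat) (N : 'rV[R]_n -> R)
  (t0 : R) (beta : \bar R) (D : set 'rV[R]_n)
  (f : R -> 'M[R]_(m, n) -> 'rV[R]_n) (k : R -> R) (g : 'I_m -> R -> R)
  (gamma : R) (theta theta' x x' : R -> 'rV[R]_n) :
  is_norm N ->
  (t0%:E < beta)%E ->
  open D ->
  (1 <= m)%N ->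
  {within [set p : R * 'M[R]_(m, n) | Jint t0 beta p.1 /\ powset m D p.2],
     continuous (fun p => f p.1 p.2)} ->
  {within Jint t0 beta, continuous k} ->
  (forall t z z', Jint t0 beta t -> powset m D z -> powset m D z' ->
     N (f t z - f t z') <= k t * normm N (z - z')) ->
  (forall j, {within Jint t0 beta, continuous (g j)}) ->
  gamma <= t0 ->
  (forall j t, Jint t0 beta t -> gamma <= g j t <= t) ->
  {within `[gamma, t0], continuous theta} ->
  {within `[gamma, t0], continuous theta'} ->
  (forall s, gamma <= s <= t0 -> D (theta s)) ->
  (forall s, gamma <= s <= t0 -> D (theta' s)) ->
  is_solution D f g gamma t0 beta theta x ->
  is_solution D f g gamma t0 beta theta' x' ->
  forall t, Jint t0 beta t ->
    N (x t - x' t) <=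
      sup [set N (theta s - theta' s) | s in `[gamma, t0]] *
      expR (\int[lebesgue_measure]_(s in `[t0, t]) k s).
Proof.
move=> hN bt0 oD m1 fc kc Lip gc gt0 gb thc thc' thD thD'
  [xc xD xr xd xth] [xc' xD' xr' xd' xth'] T [t0T Tb].
set C := sup _.
have [Nz NZ ND] := hN.
have qc : {within `[gamma, t0], continuous (fun s => N (theta s - theta' s))}.
  move=> s; apply: continuous_comp; first exact: cvgB (thc s) (thc' s).
  exact: Ncont hN _.
have [cm _ cmax] := EVT_max gt0 qc.
have ubS : has_ubound [set N (theta s - theta' s) | s in `[gamma, t0]].
  exists (N (theta cm - theta' cm)) => _ [s sI <-]; apply: cmax; rewrite inE.
  exact: sI.
have wC : forall u, gamma <= u <= t0 -> N (x u - x' u) <= C.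
  move=> u uI; rewrite xth // xth' //; apply: (ub_le_sup ubS).
  by exists u => //=; rewrite in_itv.
have C0 : 0 <= C.
  by apply: le_trans (wC t0 _); [exact: Nge0| rewrite gt0 lexx].
have [n0|n1] := eqVneq n 0.
  subst n; rewrite (thinmx0 (x T - x' T)) N0 // mulr_ge0 // expR_ge0.
have k0 : forall u, Jint t0 beta u -> 0 <= k u.
  move=> u Ju.
  have Dp : D (x t0) := xD t0 gt0 bt0.
  have [r r0 hr] := near_expl (open_nbhs_nbhs (conj oD Dp)).
  have n0' : (0 < n)%N by rewrite lt0n.
  pose e0 : 'rV[R]_n := const_mx 1.
  have e0n : e0 != 0.
    apply/eqP => /matrixP /(_ 0 (Ordinal n0')); rewrite !mxE => /eqP.
    by rewrite oner_eq0.
  have Ne0 : 0 < N e0.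
    rewrite lt_neqAle Nge0 // andbT eq_sym; apply/eqP => /Nz /eqP.
    by rewrite (negbTE e0n).
  pose a := r / (2 * (`|e0| + 1)).
  have a0 : 0 < a by rewrite divr_gt0 // mulr_gt0 // ltr_pwDr.
  pose q := x t0 + a *: e0.
  have Dq : D q.
    apply: hr; rewrite /q opprD addrA subrr sub0r normrN normrZ gtr0_norm //.
    rewrite /a mulrAC ltr_pdivrMr ?mulr_gt0 ?ltr_pwDr //.
    have := normr_ge0 e0; nra.
  pose z : 'M[R]_(m, n) := \matrix_(j, i) x t0 0 i.
  pose z' : 'M[R]_(m, n) := \matrix_(j, i) q 0 i.
  have rz : forall j, row j z = x t0.
    by move=> j; apply/rowP => i; rewrite !mxE.
  have rz' : forall j, row j z' = q.
    by move=> j; apply/rowP => i; rewrite !mxE.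
  have pz : powset m D z by move=> j; rewrite rz.
  have pz' : powset m D z' by move=> j; rewrite rz'.
  have nz : 0 < normm N (z - z').
    apply: lt_le_trans (_ : N (x t0 - q) <= _).
      rewrite /q opprD addrA subrr sub0r NN // NZ gtr0_norm //.
      exact: mulr_gt0.
    rewrite /normm; apply: le_trans (le_bigmax _ _ (Ordinal m1)).
    by rewrite linearB /= rz rz'.
  have := Lip u z z' Ju pz pz'.
  move=> /(le_trans (Nge0 hN _)).
  by rewrite pmulr_lge0.
have JI : forall u, t0 <= u <= T -> Jint t0 beta u.
  move=> u /andP[tu uT]; split => //.
  by apply: le_lt_trans Tb; rewrite lee_fin.
pose K := fun u => \int[lebesgue_measure]_(s in `[t0, u]) k s.
pose w := fun u => N (x u - x' u).
have K0 : forall u, t0 <= u <= T -> 0 <= K u.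
  move=> u /andP[tu uT]; apply: Rintegral_ge0 => v /=; rewrite in_itv /=.
  by move=> /andP[tv vu]; apply: k0; apply: JI; rewrite tv (le_trans vu uT).
have Kadd : forall a b lo, t0 <= a -> a <= b -> b <= T ->
     (forall u, a <= u <= b -> lo <= k u) -> K a + lo * (b - a) <= K b.
  move=> a b lo ta ab bT lok; apply: Kadd_lem kc ta ab _ lok.
  by apply: le_lt_trans Tb; rewrite lee_fin.
have k0' : forall u, t0 <= u <= T -> 0 <= k u by move=> u /JI /k0.
have gb' : forall j u, t0 <= u <= T -> gamma <= g j u <= u.
  by move=> j u /JI /gb.
have wcont : forall s, t0 < s <= T -> forall e, 0 < e ->
     exists2 d, 0 < d & forall u, s - d < u <= s -> w s - e < w u.
  move=> s /andP[ts sT] e e0.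
  have sb : (s%:E < beta)%E by apply: le_lt_trans Tb; rewrite lee_fin.
  case: (xd s ts sb) => dx _; case: (xd' s ts sb) => dx' _.
  have cx : {for s, continuous x}.
    by apply: differentiable_continuous; apply/derivable1_diffP.
  have cx' : {for s, continuous x'}.
    by apply: differentiable_continuous; apply/derivable1_diffP.
  have cw : {for s, continuous w}.
    apply: continuous_comp; first exact: cvgB cx cx'.
    exact: Ncont hN _.
  move: cw => /cvgrPdist_lt /(_ _ e0) H.
  have [d d0 hd] := near_expl H.
  exists d => // u /andP[sdu us].
  have := hd u; rewrite ger0_norm ?subr_ge0 // ltrBlDr -ltrBlDl => /(_ sdu).
  rewrite ltr_norml => /andP[_ H2]; lra.
have kcont : forall s, t0 <= s <= T -> forall e, 0 < e ->
     exists2 d, 0 < d & forall u, s <= u <= T -> u < s + d -> k s - e <= k u.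
  move=> s sI e e0.
  move: (kc) => /subspace_continuousP /(_ s (JI s sI)).
  move=> /cvgrPdist_lt /(_ _ e0) H.
  have H' : \forall u \near s, Jint t0 beta u -> `|k s - k u| < e := H.
  have [d d0 hd] := near_expl H'.
  exists d => // u /andP[su uT] usd.
  have := hd u; rewrite distrC ger0_norm ?subr_ge0 // ltrBlDl => /(_ usd).
  have /andP[ts _] := sI.
  move=> /(_ (JI u _)); rewrite (le_trans ts su) uT => /(_ isT).
  rewrite ltr_norml => /andP[_ H2]; lra.
have wder : forall s P, t0 <= s <= T -> (forall j, w (g j s) <= P) -> 0 <= P ->
     forall e, 0 < e -> exists2 d, 0 < d &
       forall h, 0 < h < d -> w (s + h) <= w s + h * (k s * P) + h * e.
  move=> s P sI hP P0 e e0.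
  have /andP[ts sT] := sI.
  have sb : (s%:E < beta)%E by apply: le_lt_trans Tb; rewrite lee_fin.
  have Lx : (fun h => h^-1 *: (x (h + s) - x s)) @ 0^'+ -->
      f s (\matrix_(j < m, i < n) x (g j s) 0 i).
    have [->|ne] := eqVneq s t0; first exact: xr.
    apply: rd_of_derive; apply: xd => //.
    by rewrite lt_neqAle eq_sym ne ts.
  have Lx' : (fun h => h^-1 *: (x' (h + s) - x' s)) @ 0^'+ -->
      f s (\matrix_(j < m, i < n) x' (g j s) 0 i).
    have [->|ne] := eqVneq s t0; first exact: xr'.
    apply: rd_of_derive; apply: xd' => //.
    by rewrite lt_neqAle eq_sym ne ts.
  have [d d0 hd] := wder_gen hN Lx Lx' e e0.
  exists d => // h hh; apply: le_trans (hd h hh) _.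
  have /andP[h0 _] := hh.
  rewrite lerD2r lerD2l; apply: ler_wpM2l; first exact: ltW.
  have Js := JI s sI.
  have rw : forall (y : R -> 'rV[R]_n) j,
      row j (\matrix_(j < m, i < n) y (g j s) 0 i) = y (g j s).
    by move=> y j; apply/rowP => i; rewrite !mxE.
  have pz : forall y : R -> 'rV[R]_n, (forall u, gamma <= u -> (u%:E < beta)%E -> D (y u)) ->
      powset m D (\matrix_(j < m, i < n) y (g j s) 0 i).
    move=> y yD j; rewrite rw; have /andP[g1 g2] := gb j s Js.
    by apply: yD => //; apply: le_lt_trans sb; rewrite lee_fin.
  apply: le_trans (Lip s _ _ Js (pz x xD) (pz x' xD')) _.
  apply: ler_wpM2l; first exact: k0.
  rewrite /normm; apply: bigmax_le => // j _.
  by rewrite linearB /= !rw; exact: hP.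
apply/ler_addgt0Pr => e e0.
set E := expR (K T + T - t0).
have E0 : 0 < E by exact: expR_gt0.
have := @core R t0 T gamma C (e / E) w K k m g gt0 t0T C0 (divr_gt0 e0 E0)
  wC K0 Kadd k0' wcont wder kcont gb'.
by rewrite -/E divfK ?gt_eqF.
Qed.
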